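(* Let $(V,E)$ be a finite connected bipartite graph with parts $V=V_1\cup V_2$ and positive edge weight function $m$, and let $\lambda$ be its spectral expansion. Let $U\subseteq V_1$ be non-empty, $N(U)=\{v\in V_2:\exists u\in U,\ \{u,v\}\in E\}$, $0<\delta<1$, and let $W\subseteq N(U)$ be such that for every $u\in U$, $$\frac{\sum_{v\in W,\ \{u,v\}\in E}m(\{u,v\})}{m(u)}\ge\delta.$$ Then $$\frac{m(U)}{m(W)}\le\frac{4}{3\delta}\left(\frac{2\lambda}{\sqrt{\delta}}+\frac{m(U)}{m(V_1)}\right).$$
   Context: For a weighted graph, $m(v)=\sum_{e\ni v}m(e)$ and $m(S)=\sum_{v\in S}m(v)$ for a vertex set $S$. Let $\ell^2(V)$ be the real functions on $V$ with inner product $\langle\phi,\psi\rangle=\sum_v m(v)\phi(v)\psi(v)$, and let $M$ be the random walk operator $M\phi(v)=\frac1{m(v)}\sum_{u:\{u,v\}\in E}m(\{u,v\})\phi(u)$. For a bipartite graph with parts $V_1,V_2$, the spectral expansion $\lambda$ is the largest absolute value of an eigenvalue of $M$ restricted to the orthogonal complement of $\operatorname{span}\{\mathbb{1}_{V_1},\mathbb{1}_{V_2}\}$ (equivalently, the smallest $\lambda$ with $\|M\phi\|\le\lambda\|\phi\|$ for all $\phi\perp\mathbb{1}_{V_1},\mathbb{1}_{V_2}$). *)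

(* Defs.v *)
From mathcomp Require Import all_boot all_order all_algebra.
From mathcomp Require Import reals.
Set Implicit Arguments. Unset Strict Implicit. Unset Printing Implicit Defensive.
Import Order.TTheory GRing.Theory Num.Theory.
Local Open Scope ring_scope.

Section Defs.
Variables (R : realType) (T : finType).

(* A weighted graph on the finite vertex type T is given by a symmetric,
   nonnegative weight function w; {x,y} is an edge iff 0 < w x y, and then
   m({x,y}) = w x y. *)
Definition edge (w : T -> T -> R) : rel T := fun x y => 0 < w x y.

Definition is_weighted_graph (w : T -> T -> R) : Prop :=
  (forall x y, w x y = w y x) /\ (forall x y, 0 <= w x y).

Definition connected_graph (w : T -> T -> R) : Prop :=
  forall x y, connect (edge w) x y.

(* bipartite with parts V1 and V2 = ~: V1: every edge joins the two parts *)
Definition bipartite_parts (w : T -> T -> R) (V1 : {set T}) : Prop :=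
  forall x y, edge w x y -> (x \in V1) != (y \in V1).

Definition mv (w : T -> T -> R) (v : T) : R := \sum_(u : T) w v u.
Definition mS (w : T -> T -> R) (S : {set T}) : R := \sum_(v in S) mv w v.

Definition inner (w : T -> T -> R) (f g : T -> R) : R :=
  \sum_(v : T) mv w v * f v * g v.
Definition l2norm (w : T -> T -> R) (f : T -> R) : R := Num.sqrt (inner w f f).

Definition walk (w : T -> T -> R) (f : T -> R) : T -> R :=
  fun v => (mv w v)^-1 * \sum_(u : T) w v u * f u.

Definition indic (A : {set T}) : T -> R := fun v => (v \in A)%:R.

Definition expansion_bound (w : T -> T -> R) (V1 : {set T}) (lam : R) : Prop :=
  forall f : T -> R,
    inner w f (indic V1) = 0 -> inner w f (indic (~: V1)) = 0 ->
    l2norm w (walk w f) <= lam * l2norm w f.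

Definition spectral_expansion (w : T -> T -> R) (V1 : {set T}) (lam : R) : Prop :=
  expansion_bound w V1 lam /\ (forall mu, expansion_bound w V1 mu -> lam <= mu).

Definition nbhd (w : T -> T -> R) (V1 U : {set T}) : {set T} :=
  [set v in ~: V1 | [exists u in U, edge w u v]].

End Defs.

(* Main.v *)
Require Import Defs.
From mathcomp Require Import all_boot all_order all_algebra.
From mathcomp Require Import reals.
From mathcomp Require Import ring lra.
Import Order.TTheory GRing.Theory Num.Theory.
Local Open Scope ring_scope.
Set Implicit Arguments. Unset Strict Implicit.

Section Helpers.
Variables (R : realType) (T : finType) (w : T -> T -> R).
Hypothesis Hsym : forall x y, w x y = w y x.
Hypothesis Hnn : forall x y, 0 <= w x y.

Lemma mv_ge0 v : 0 <= mv w v.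
Proof. by apply: sumr_ge0 => u _. Qed.

Lemma mv0 v : mv w v = 0 -> forall u, w v u = 0.
Proof. move=> H u; exact: (psumr_eq0P (fun u _ => Hnn v u) H). Qed.

Definition D (h g : T -> R) := \sum_v \sum_u h v * w v u * g u.

Lemma inner_walk h g : inner w h (walk w g) = D h g.
Proof.
rewrite /inner /walk /D; apply: eq_bigr => v _.
have [m0|mn0] := eqVneq (mv w v) 0.
  rewrite m0 !mul0r big1 // => u _; by rewrite (mv0 m0) mulr0 mul0r.
transitivity (h v * \sum_u w v u * g u); first by field.
by rewrite mulr_sumr; apply: eq_bigr => u _; rewrite mulrA.
Qed.

Lemma sum4 (I : finType) (F G H K : I -> R) a b c :
  \sum_i (F i - b * G i - a * H i + c * K i) =
  \sum_i F i - b * \sum_i G i - a * \sum_i H i + c * \sum_i K i.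
Proof. by rewrite big_split /= !sumrB !mulr_sumr. Qed.

Lemma sum2 (I : finType) (F G : I -> R) a :
  \sum_i (F i - a * G i) = \sum_i F i - a * \sum_i G i.
Proof. by rewrite sumrB mulr_sumr. Qed.

Lemma D_lin h1 h2 g1 g2 a b :
  D (fun v => h1 v - a * h2 v) (fun u => g1 u - b * g2 u) =
  D h1 g1 - b * D h1 g2 - a * D h2 g1 + a * b * D h2 g2.
Proof.
rewrite /D -sum4; apply: eq_bigr => v _.
rewrite -sum4; apply: eq_bigr => u _; ring.
Qed.

Lemma inner_linl h1 h2 g a :
  inner w (fun v => h1 v - a * h2 v) g = inner w h1 g - a * inner w h2 g.
Proof. rewrite /inner -sum2; apply: eq_bigr => v _; ring. Qed.

Lemma inner_sym f g : inner w f g = inner w g f.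
Proof. rewrite /inner; apply: eq_bigr => v _; ring. Qed.

Lemma inner_indic X Y : inner w (indic R X) (indic R Y) = mS w (X :&: Y).
Proof.
rewrite /inner /mS [RHS]big_mkcond; apply: eq_bigr => v _.
by rewrite /indic inE; case: (v \in X); case: (v \in Y); rewrite /= ?mulr1 ?mulr0.
Qed.

Lemma D_indic X Y : D (indic R X) (indic R Y) = \sum_(v in X) \sum_(u in Y) w v u.
Proof.
rewrite /D [RHS]big_mkcond; apply: eq_bigr => v _.
rewrite [in RHS]big_mkcond /indic; case: (v \in X) => /=.
  by apply: eq_bigr => u _; case: (u \in Y); rewrite /= ?mulr1 ?mul1r ?mulr0.
by rewrite big1 // => u _; rewrite !mul0r.
Qed.

Lemma sum_subset_le (F : T -> R) (A B : {set T}) :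
  (forall i, 0 <= F i) -> A \subset B -> \sum_(i in A) F i <= \sum_(i in B) F i.
Proof.
move=> F0 /subsetP AB; rewrite [X in X <= _]big_mkcond [X in _ <= X]big_mkcond.
apply: ler_sum => i _; case: ifP => iA; first by rewrite (AB _ iA).
by case: ifP.
Qed.

Lemma inner_cs f g t : 2 * t * inner w f g <= t ^+ 2 * inner w f f + inner w g g.
Proof.
rewrite /inner !mulr_sumr -big_split /=; apply: ler_sum => v _.
have E : t ^+ 2 * (mv w v * f v * f v) + mv w v * g v * g v - 2 * t * (mv w v * f v * g v)
   = mv w v * (t * f v - g v) ^+ 2 by ring.
by rewrite -subr_ge0 E mulr_ge0 ?mv_ge0 ?sqr_ge0.
Qed.

Lemma inner_sq_ge0 f : 0 <= inner w f f.
Proof. by apply: sumr_ge0 => v _; rewrite -mulrA; apply: mulr_ge0; [exact: mv_ge0| rewrite -expr2; exact: sqr_ge0]. Qed.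

Variable V1 : {set T}.
Hypothesis Hbip : bipartite_parts w V1.

Lemma zero_same x y : (x \in V1) = (y \in V1) -> w x y = 0.
Proof.
move=> E; have := Hnn x y; rewrite le_eqVlt => /orP[/eqP<-//|H].
by have := Hbip H; rewrite /edge E eqxx.
Qed.

Lemma side_sum v (S : {set T}) : (forall u, (u \in S) = ((u \in V1) != (v \in V1))) ->
  \sum_(u in S) w v u = mv w v.
Proof.
move=> HS; rewrite /mv [RHS](bigID (fun u => u \in S)) /= [X in _ = _ + X]big1 ?addr0.
  by apply: eq_bigl => u.
move=> u; rewrite HS negbK => /eqP E; exact: zero_same.
Qed.

End Helpers.

Theorem lemma7p8 (R : realType) (T : finType) (w : T -> T -> R)
  (V1 : {set T}) (lam : R) (U W : {set T}) (delta : R) :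
  is_weighted_graph w ->
  connected_graph w ->
  bipartite_parts w V1 ->
  spectral_expansion w V1 lam ->
  U \subset V1 -> U != set0 ->
  0 < delta -> delta < 1 ->
  W \subset nbhd w V1 U ->
  (forall u, u \in U -> delta <= (\sum_(v in W) w u v) / mv w u) ->
  mS w U / mS w W <=
    4 / (3 * delta) * (2 * lam / Num.sqrt delta + mS w U / mS w V1).
Proof.
move=> [Hsym Hnn] _ Hbip [Hexp Hmin] UV1 Un0 d0 d1 WN Hd.
set V2 := ~: V1.
have WV2 : W \subset V2.
  by apply/subsetP => x /(subsetP WN); rewrite inE => /andP[].
have mvU : forall v, v \in U -> 0 < mv w v.
  move=> v vU; have := Hd v vU; have [->|hne] := eqVneq (mv w v) 0.
    rewrite invr0 mulr0 => h; lra.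
  by move=> _; rewrite lt_neqAle eq_sym hne mv_ge0.
set u := mS w U. set wW := mS w W. set E := mS w V1.
have u0 : 0 < u.
  case/set0Pn: Un0 => x xU; rewrite /u /mS (bigD1 x xU) /=.
  have := mvU x xU.
  have : 0 <= \sum_(i in U | i != x) mv w i by apply: sumr_ge0 => *; exact: mv_ge0.
  lra.
have uE : u <= E := sum_subset_le (mv_ge0 Hnn) UV1.
have E0 : 0 < E by apply: lt_le_trans uE.
set e := \sum_(v in U) \sum_(x in W) w v x.
have F1 : delta * u <= e.
  rewrite /u /mS mulr_sumr; apply: ler_sum => v vU.
  by have := Hd v vU; rewrite ler_pdivlMr ?mvU.
have sideV1 : forall x, x \in V2 -> \sum_(v in V1) w x v = mv w x.
  move=> x; rewrite inE => xV; apply: (side_sum Hnn Hbip) => y.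
  by rewrite (negbTE xV); case: (y \in V1).
have sideV2 : forall x, x \in V1 -> \sum_(v in V2) w x v = mv w x.
  move=> x xV; apply: (side_sum Hnn Hbip) => y.
  by rewrite inE xV; case: (y \in V1).
have F2 : e <= wW.
  rewrite /e exchange_big /wW /mS; apply: ler_sum => x xW.
  apply: le_trans (sum_subset_le (F := fun v => w v x) _ UV1) _ => //.
  rewrite -(sideV1 x (subsetP WV2 x xW)); rewrite le_eqVlt; apply/orP; left; apply/eqP/eq_bigr => v _; exact: Hsym.
have wW0 : 0 < wW.
  have := mulr_gt0 d0 u0; lra.
have E2 : mS w V2 = E.
  rewrite /mS; transitivity (\sum_(v in V2) \sum_(x in V1) w v x).
    by apply: eq_bigr => v vV2; rewrite sideV1.
  rewrite exchange_big; apply: eq_bigr => x xV1; rewrite -sideV2 //.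
  by apply: eq_bigr => v _; exact: Hsym.
have lam0 : 0 <= lam.
  rewrite leNgt; apply/negP => hl.
  suff /Hmin : expansion_bound w V1 (lam - 1) by lra.
  move=> f h1 h2; have := Hexp f h1 h2; rewrite /l2norm.
  have := sqrtr_ge0 (inner w (walk w f) (walk w f)).
  have := sqrtr_ge0 (inner w f f).
  set A := Num.sqrt _; set B := Num.sqrt _ => hA hB hBA.
  have hA0 : A = 0 by apply/eqP; rewrite eq_le hA andbT; nra.
  rewrite hA0 mulr0 in hBA *; lra.
have setI0 : forall X Y : {set T}, X \subset V1 -> Y \subset V2 -> X :&: Y = set0.
  move=> X Y /subsetP XV /subsetP YV; apply/setP => x; rewrite !inE.
  case: (boolP (x \in X)) => //= /XV xV; apply/negP => /YV; by rewrite inE xV.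
have mS0 : mS w set0 = 0 by rewrite /mS big_set0.
have V1V2 : V1 \subset V1 by [].
have V2V2 : V2 \subset V2 by [].
have En0 : E != 0 by rewrite gt_eqF.
set a := u / E. set b := wW / E.
set f' := fun v => indic R U v - a * indic R V1 v.
set g' := fun v => indic R W v - b * indic R V2 v.
have hg1 : inner w g' (indic R V1) = 0.
  rewrite inner_linl !inner_indic setIC (setI0 _ _ _ WV2) // setIC setI0 //.
  by rewrite mS0 mulr0 subr0.
have hg2 : inner w g' (indic R V2) = 0.
  by rewrite inner_linl !inner_indic setIid (setIidPl WV2) E2 -/wW /b divfK // subrr.
have hf1 : inner w f' (indic R V1) = 0.
  by rewrite inner_linl !inner_indic setIid (setIidPl UV1) -/u -/E /a divfK // subrr.
have hf2 : inner w f' (indic R V2) = 0.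
  rewrite inner_linl !inner_indic !setI0 //; by rewrite mS0 mulr0 subr0.
have HA : inner w f' f' <= u.
  rewrite inner_linl (inner_sym _ (indic R V1)) hf1 (inner_sym _ (indic R U)) inner_linl.
  rewrite !inner_indic setIid setIC (setIidPl UV1).
  have : 0 <= a * u by rewrite /a; apply: mulr_ge0; [apply: divr_ge0|]; apply: ltW.
  rewrite -/u; lra.
have HB : inner w g' g' <= wW.
  rewrite inner_linl (inner_sym _ (indic R V2)) hg2 (inner_sym _ (indic R W)) inner_linl.
  rewrite !inner_indic setIid setIC (setIidPl WV2) -/wW.
  have : 0 <= b * wW by rewrite /b; apply: mulr_ge0; [apply: divr_ge0|]; apply: ltW.
  lra.
have HQ : inner w (walk w g') (walk w g') <= lam ^+ 2 * inner w g' g'.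
  have := Hexp g' hg1 hg2; rewrite /l2norm.
  have := sqr_sqrtr (inner_sq_ge0 Hnn (walk w g')).
  have := sqr_sqrtr (inner_sq_ge0 Hnn g').
  have := sqrtr_ge0 (inner w (walk w g') (walk w g')).
  move=> hB eB eQ hBA; rewrite -eB -eQ; nra.
have HP : inner w f' (walk w g') = e - b * u - a * wW + a * b * E.
  rewrite inner_walk // D_lin !D_indic -/e.
  have -> : \sum_(v in U) \sum_(x in V2) w v x = u.
    by apply: eq_bigr => v vU; rewrite sideV2 // (subsetP UV1).
  have -> : \sum_(v in V1) \sum_(x in V2) w v x = E.
    by apply: eq_bigr => v vV; rewrite sideV2.
  have -> : \sum_(v in V1) \sum_(x in W) w v x = wW; last by [].
  rewrite exchange_big; apply: eq_bigr => x xW.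
  rewrite -(sideV1 x (subsetP WV2 x xW)); apply: eq_bigr => v _; exact: Hsym.
have HCS := inner_cs Hnn f' (walk w g') (delta / 2).
move: HCS HA HB HQ HP.
set P := inner w f' (walk w g').
set A := inner w f' f'. set B := inner w g' g'. set Q := inner w (walk w g') _.
move=> HCS HA HB HQ HP.
have HP' : P = e - a * wW.
  rewrite HP /a /b; field; exact: En0.
have a0 : 0 <= a by rewrite /a; apply: divr_ge0; apply: ltW.
have key : delta ^+ 2 * u <= delta * a * wW + delta ^+ 2 * u / 4 + lam ^+ 2 * wW.
  have h1 : delta ^+ 2 * u <= delta * e.
    by rewrite expr2 -mulrA ler_pM2l.
  have h2 : lam ^+ 2 * B <= lam ^+ 2 * wW by apply: ler_wpM2l => //; apply: sqr_ge0.
  have h3 : (delta / 2) ^+ 2 * A <= (delta / 2) ^+ 2 * u by apply: ler_wpM2l => //; apply: sqr_ge0.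
  have h4 : 2 * (delta / 2) * P = delta * e - delta * a * wW by rewrite HP'; field.
  have h5 : (delta / 2) ^+ 2 * u = delta ^+ 2 * u / 4 by field.
  lra.
set s := Num.sqrt delta.
have s0 : 0 < s by rewrite sqrtr_gt0.
have ss : delta = s ^+ 2 by rewrite sqr_sqrtr // ltW.
set r := lam / s.
have lr : lam = r * s by rewrite /r divfK // gt_eqF.
have r0 : 0 <= r by rewrite /r divr_ge0 // ltW.
rewrite ler_pdivrMr //.
have -> : 4 / (3 * delta) * (2 * lam / s + a) * wW = (4 * (2 * r + a) * wW) / (3 * delta).
  rewrite /r; field; apply/andP; split; rewrite gt_eqF //.
rewrite ler_pdivlMr; last by lra.
have F12 : delta * u <= wW by lra.
have [hr|hr] := leP (3 / 8) r.
  have : 0 <= a * wW by rewrite mulr_ge0 // ltW.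
  have : 3 / 8 * wW <= r * wW by rewrite ler_wpM2r // ltW.
  lra.
have key2 : 3 * delta * u <= 4 * (a * wW + r ^+ 2 * wW).
  rewrite lr ss in key; rewrite ss.
  have sp : 0 < s ^+ 2 by rewrite exprn_gt0.
  rewrite -(ler_pM2l sp).
  have -> : s ^+ 2 * (4 * (a * wW + r ^+ 2 * wW)) = 4 * (s ^+ 2 * a * wW + (r * s) ^+ 2 * wW) by ring.
  have -> : s ^+ 2 * (3 * s ^+ 2 * u) = 3 * ((s ^+ 2) ^+ 2 * u) by ring.
  lra.
have : r ^+ 2 * wW <= 2 * r * wW.
  apply: ler_wpM2r; [exact: ltW|]; rewrite expr2; nra.
lra.
Qed.
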